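(* Let $\theta$ be the parameters of an Elman RNN with $L$ layers such that every bias vector $\mathbf{b}^\ell$ ($0\le\ell\le L-1$) has all entries nonzero, and let $\mathcal{X}(\theta)$ be as defined below. Suppose $\theta\in\mathcal{X}(\theta)$ and $\theta'=\mathcal{P}(\theta)\in\mathcal{X}(\theta)$ where $\mathcal{P}=(\mathbf{I},\tilde{\mathbf{P}}^1\mathbf{D}^1,\dots,\tilde{\mathbf{P}}^{L-1}\mathbf{D}^{L-1},\mathbf{I})$ with each $\tilde{\mathbf{P}}^\ell$ a permutation matrix and each $\mathbf{D}^\ell$ a diagonal matrix with strictly positive diagonal entries. Then $\mathbf{D}^\ell=\mathbf{I}_{d_\ell}$ for all $0<\ell<L$.
   Context: Elman RNN: parameters $\theta=(\mathbf{W}_{\mathrm{rec}}^{\ell+1},\mathbf{W}_{\mathrm{ff}}^{\ell},\mathbf{b}^{\ell})_{0\le\ell\le L-1}$ with $\mathbf{W}_{\mathrm{ff}}^{\ell}\in\mathbb{R}^{d_{\ell+1}\times d_\ell}$, $\mathbf{W}_{\mathrm{rec}}^{\ell+1}\in\mathbb{R}^{d_{\ell+1}\times d_{\ell+1}}$, $\mathbf{b}^\ell\in\mathbb{R}^{d_{\ell+1}}$. An element $\mathcal{P}=(\mathbf{P}^0,\dots,\mathbf{P}^L)$ with $\mathbf{P}^0=\mathbf{I}$, $\mathbf{P}^L=\mathbf{I}$ and invertible $\mathbf{P}^\ell$ acts on $\theta$ by replacing, for each $1\le\ell\le L$, $(\mathbf{W}_{\mathrm{rec}}^{\ell},\mathbf{W}_{\mathrm{ff}}^{\ell-1},\mathbf{b}^{\ell-1})$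 with $(\mathbf{P}^\ell\mathbf{W}_{\mathrm{rec}}^{\ell}(\mathbf{P}^\ell)^{-1},\ \mathbf{P}^\ell\mathbf{W}_{\mathrm{ff}}^{\ell-1}(\mathbf{P}^{\ell-1})^{-1},\ \mathbf{P}^\ell\mathbf{b}^{\ell-1})$, giving $\mathcal{P}(\theta)$. $\mathcal{G}_{\mathrm{scaled}}$ is the set of such $\mathcal{P}$ with each $\mathbf{P}^\ell=\tilde{\mathbf{P}}^\ell\mathbf{D}^\ell$ ($1\le\ell\le L-1$), $\tilde{\mathbf{P}}^\ell$ a permutation matrix, $\mathbf{D}^\ell$ diagonal with strictly positive diagonal. Norm: $\|\theta\|_2^2=\|\mathbf{W}_{\mathrm{ff}}^{L-1}\|_F^2+\|\mathbf{b}^{L-1}\|^2+\sum_{0<\ell<L}(\|\mathbf{W}_{\mathrm{rec}}^{\ell}\|_F^2+\|\mathbf{W}_{\mathrm{ff}}^{\ell-1}\|_F^2+\|\mathbf{b}^{\ell-1}\|^2)$. $\mathcal{X}(\theta)$ is the set of $\theta'$ minimizing $\|\theta'\|_2$ subject to $\theta'=\mathcal{P}(\theta)$ for some $\mathcal{P}\in\mathcal{G}_{\mathrm{scaled}}$. *)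

(* Defs.v *)
From HB Require Import structures.
From mathcomp Require Import all_boot all_order all_algebra all_fingroup.
Set Implicit Arguments. Unset Strict Implicit. Unset Printing Implicit Defensive.
Import Order.TTheory GRing.Theory Num.Theory.
Local Open Scope ring_scope.

(* Index convention: for 0 <= l <= L-1,
     Wrec l : W_rec^{l+1}  in R^{d_{l+1} x d_{l+1}}
     Wff  l : W_ff^{l}     in R^{d_{l+1} x d_l}
     bias l : b^{l}        in R^{d_{l+1}} (column vector). *)
Record rnn_params (R : Type) (d : nat -> nat) := RNNParams {
  Wrec : forall l : nat, 'M[R]_(d l.+1);
  Wff  : forall l : nat, 'M[R]_(d l.+1, d l);
  bias : forall l : nat, 'cV[R]_(d l.+1)
}.

Definition params_eq (R : Type) (d : nat -> nat) (L : nat) (t1 t2 : rnn_params R d) :=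
  forall l, (l < L)%N ->
    [/\ Wrec t1 l = Wrec t2 l, Wff t1 l = Wff t2 l & bias t1 l = bias t2 l].

Definition frob2 (R : numDomainType) m n (A : 'M[R]_(m, n)) : R :=
  \sum_(i < m) \sum_(j < n) A i j ^+ 2.

Definition params_norm2 (R : numDomainType) (d : nat -> nat) (L : nat)
    (t : rnn_params R d) : R :=
  frob2 (Wff t L.-1) + frob2 (bias t L.-1)
  + \sum_(1 <= l < L) (frob2 (Wrec t l.-1) + frob2 (Wff t l.-1) + frob2 (bias t l.-1)).

Definition params_norm (R : rcfType) (d : nat -> nat) (L : nat) (t : rnn_params R d) : R :=
  Num.sqrt (params_norm2 L t).

(* An element of G_scaled is given by permutations ptilde l and diagonals
   dg l (row vectors) for 0 < l < L; P^0 = P^L = I. *)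
Definition Pmat (R : numDomainType) (d : nat -> nat) (L : nat)
    (ps : forall l, 'S_(d l)) (dg : forall l, 'rV[R]_(d l)) (l : nat) : 'M[R]_(d l) :=
  if (0 < l < L)%N then perm_mx (ps l) *m diag_mx (dg l) else 1%:M.

Definition in_Gscaled (R : numDomainType) (d : nat -> nat) (L : nat)
    (dg : forall l, 'rV[R]_(d l)) : Prop :=
  forall l, (0 < l < L)%N -> forall i, 0 < dg l 0 i.

Definition Pact (R : numFieldType) (d : nat -> nat) (L : nat)
    (ps : forall l, 'S_(d l)) (dg : forall l, 'rV[R]_(d l)) (t : rnn_params R d)
    : rnn_params R d :=
  RNNParams
    (fun l => Pmat L ps dg l.+1 *m Wrec t l *m invmx (Pmat L ps dg l.+1))
    (fun l => Pmat L ps dg l.+1 *m Wff t l *m invmx (Pmat L ps dg l))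
    (fun l => Pmat L ps dg l.+1 *m bias t l).

Definition in_X (R : rcfType) (d : nat -> nat) (L : nat) (t t' : rnn_params R d) : Prop :=
  (exists ps dg, in_Gscaled L dg /\ params_eq L t' (Pact L ps dg t)) /\
  (forall ps dg, in_Gscaled L dg -> params_norm L t' <= params_norm L (Pact L ps dg t)).

(* Main.v *)
Require Import Defs.
From HB Require Import structures.
From mathcomp Require Import all_boot all_order all_algebra all_fingroup.
From mathcomp Require Import ring lra.
Set Implicit Arguments. Unset Strict Implicit. Unset Printing Implicit Defensive.
Import Order.TTheory GRing.Theory Num.Theory.
Local Open Scope ring_scope.

Definition Qf (R : numFieldType) m n (u : 'I_m -> R) (v : 'I_n -> R)
  (A : 'M[R]_(m, n)) : R := \sum_i \sum_j (u i / v j) ^+ 2 * A i j ^+ 2.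

Definition Gq (R : numFieldType) m n (u : 'I_m -> R) (v : 'I_n -> R)
  (A : 'M[R]_(m, n)) : R := \sum_i \sum_j ((u i / v j) ^+ 2 - 1) ^+ 2 * A i j ^+ 2.

Lemma Qf_ext (R : numFieldType) m n (u u' : 'I_m -> R) (v v' : 'I_n -> R) A :
  u =1 u' -> v =1 v' -> Qf u v A = Qf u' v' A.
Proof.
move=> hu hv; rewrite /Qf; apply eq_bigr => i _; apply eq_bigr => j _.
by rewrite hu hv.
Qed.

Lemma frob2_row_perm (R : numDomainType) m n (s : 'S_m) (A : 'M[R]_(m, n)) :
  frob2 (row_perm s A) = frob2 A.
Proof.
rewrite /frob2 [RHS](reindex_inj (@perm_inj _ s)) /=.
by apply eq_bigr => i _; apply eq_bigr => j _; rewrite mxE.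
Qed.

Lemma frob2_col_perm (R : numDomainType) m n (s : 'S_n) (A : 'M[R]_(m, n)) :
  frob2 (col_perm s A) = frob2 A.
Proof.
rewrite /frob2; apply eq_bigr => i _.
rewrite [RHS](reindex_inj (@perm_inj _ s)) /=.
by apply eq_bigr => j _; rewrite mxE.
Qed.

Lemma frob2_ge0 (R : realDomainType) m n (A : 'M[R]_(m, n)) : 0 <= frob2 A.
Proof. by apply: sumr_ge0 => i _; apply: sumr_ge0 => j _; apply: sqr_ge0. Qed.

Lemma norm2_ge0 (R : realDomainType) d L (t : rnn_params R d) : 0 <= params_norm2 L t.
Proof.
rewrite /params_norm2; apply: addr_ge0; first by apply: addr_ge0; apply: frob2_ge0.
apply: sumr_ge0 => l _; rewrite !addr_ge0 //; apply: frob2_ge0.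
Qed.

Definition dd (R : numDomainType) (d : nat -> nat) (L : nat)
  (dg : forall l, 'rV[R]_(d l)) (l : nat) (i : 'I_(d l)) : R :=
  if (0 < l < L)%N then dg l 0 i else 1.
Arguments dd {R d} L dg l i.

Lemma dd_gt0 (R : numDomainType) d L (dg : forall l, 'rV[R]_(d l)) l i :
  in_Gscaled L dg -> 0 < dd L dg l i.
Proof. by move=> hP; rewrite /dd; case: ifP => // H; apply: hP. Qed.

Lemma Pmat_eq (R : numDomainType) d L (ps : forall l, 'S_(d l))
  (dg : forall l, 'rV[R]_(d l)) l :
  Pmat L ps dg l = perm_mx (if (0 < l < L)%N then ps l else 1%g)
     *m diag_mx (\row_i dd L dg l i).
Proof.
rewrite /Pmat /dd; case: ifP => _.
  by congr (_ *m diag_mx _); apply/matrixP => i j; rewrite !mxE (ord1 i).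
rewrite perm_mx1 mul1mx -diag_const_mx; congr diag_mx.
by apply/matrixP => i j; rewrite !mxE.
Qed.

Lemma invPmat (R : numFieldType) d L (ps : forall l, 'S_(d l))
  (dg : forall l, 'rV[R]_(d l)) l : in_Gscaled L dg ->
  invmx (Pmat L ps dg l) = diag_mx (\row_i (dd L dg l i)^-1)
     *m perm_mx (if (0 < l < L)%N then ps l else 1%g)^-1.
Proof.
move=> hP; rewrite Pmat_eq.
set P := _ *m _; set Q := _ *m _.
have H : P *m Q = 1%:M.
  rewrite /P /Q mulmxA -[perm_mx _ *m diag_mx _ *m diag_mx _]mulmxA mulmx_diag.
  have -> : \row_j ((\row_i dd L dg l i) 0 j * (\row_i (dd L dg l i)^-1) 0 j)
     = const_mx 1.
    apply/matrixP => i j; rewrite !mxE divff //.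
    by apply: lt0r_neq0; apply: dd_gt0.
  by rewrite diag_const_mx mulmx1 -perm_mxM mulgV perm_mx1.
rewrite -[invmx P]mulmx1 -H mulmxA mulVmx ?mul1mx //.
by case: (mulmx1_unit H).
Qed.

Lemma frob_Pact (R : numFieldType) d L (ps : forall l, 'S_(d l))
  (dg : forall l, 'rV[R]_(d l)) l' l (A : 'M[R]_(d l', d l)) : in_Gscaled L dg ->
  frob2 (Pmat L ps dg l' *m A *m invmx (Pmat L ps dg l))
  = Qf (dd L dg l') (dd L dg l) A.
Proof.
move=> hP; rewrite invPmat // Pmat_eq.
set q' := (if _ then _ else _); set q := (if _ then _ else _).
set E' := diag_mx _; set Ei := diag_mx _.
have -> : perm_mx q' *m E' *m A *m (Ei *m perm_mx q^-1)
  = col_perm q (row_perm q' (E' *m A *m Ei)) by rewrite col_permE row_permE !mulmxA.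
rewrite /E' /Ei.
rewrite frob2_col_perm frob2_row_perm mul_mx_diag mul_diag_mx /frob2 /Qf.
apply eq_bigr => i _; apply eq_bigr => j _; rewrite !mxE.
by rewrite mulrAC !exprMn.
Qed.

Lemma frob_Pbias (R : numFieldType) d L (ps : forall l, 'S_(d l))
  (dg : forall l, 'rV[R]_(d l)) l' (b : 'cV[R]_(d l')) :
  frob2 (Pmat L ps dg l' *m b) = Qf (dd L dg l') (fun _ => 1) b.
Proof.
rewrite Pmat_eq -mulmxA -row_permE frob2_row_perm mul_diag_mx /frob2 /Qf.
apply eq_bigr => i _; apply eq_bigr => j _; rewrite !mxE.
by rewrite divr1 exprMn.
Qed.

Lemma frob_id (R : numFieldType) m n (A : 'M[R]_(m, n)) :
  frob2 A = Qf (fun _ => 1) (fun _ => 1) A.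
Proof.
rewrite /frob2 /Qf; apply eq_bigr => i _; apply eq_bigr => j _.
by rewrite divr1 expr1n mul1r.
Qed.

Lemma sum3 (R : numFieldType) (I : Type) (r : seq I) (P : pred I) (a b c g : I -> R) :
  (forall i, a i + b i - 2 * c i = g i) ->
  \sum_(i <- r | P i) a i + \sum_(i <- r | P i) b i - 2 * \sum_(i <- r | P i) c i
  = \sum_(i <- r | P i) g i.
Proof.
move=> H; rewrite mulr_sumr -big_split -sumrB; apply eq_bigr => i _; exact: H.
Qed.

Lemma Q_gap (R : numFieldType) m n (u : 'I_m -> R) (v : 'I_n -> R) A :
  Qf (fun i => u i ^+ 2) (fun j => v j ^+ 2) A + Qf (fun _ => 1) (fun _ => 1) A
  - 2 * Qf u v A = Gq u v A.
Proof.
apply: sum3 => i; apply: sum3 => j.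
have e : u i ^+ 2 / v j ^+ 2 = (u i / v j) ^+ 2 by rewrite exprMn exprVn.
rewrite e divr1 expr1n; set x := u i / v j; ring.
Qed.

Lemma Gq_ge0 (R : realFieldType) m n (u : 'I_m -> R) (v : 'I_n -> R) A :
  0 <= Gq u v A.
Proof.
apply: sumr_ge0 => i _; apply: sumr_ge0 => j _.
by apply: mulr_ge0; apply: sqr_ge0.
Qed.

Definition EQ (R : numFieldType) d L (f : forall l, 'I_(d l) -> R)
  (t : rnn_params R d) : R :=
  Qf (f L.-1.+1) (f L.-1) (Wff t L.-1) + Qf (f L.-1.+1) (fun _ => 1) (bias t L.-1)
  + \sum_(1 <= l < L) (Qf (f l.-1.+1) (f l.-1.+1) (Wrec t l.-1)
       + Qf (f l.-1.+1) (f l.-1) (Wff t l.-1) + Qf (f l.-1.+1) (fun _ => 1) (bias t l.-1)).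

Definition EG (R : numFieldType) d L (f : forall l, 'I_(d l) -> R)
  (t : rnn_params R d) : R :=
  Gq (f L.-1.+1) (f L.-1) (Wff t L.-1) + Gq (f L.-1.+1) (fun _ => 1) (bias t L.-1)
  + \sum_(1 <= l < L) (Gq (f l.-1.+1) (f l.-1.+1) (Wrec t l.-1)
       + Gq (f l.-1.+1) (f l.-1) (Wff t l.-1) + Gq (f l.-1.+1) (fun _ => 1) (bias t l.-1)).

Lemma EQ_ext (R : numFieldType) d L (f g : forall l, 'I_(d l) -> R) t :
  (forall l i, f l i = g l i) -> EQ L f t = EQ L g t.
Proof.
move=> H; rewrite /EQ !(Qf_ext _ (H _) (H _)) !(Qf_ext _ (H _) (fun=> erefl)).
congr (_ + _); apply eq_bigr => l _.
by rewrite !(Qf_ext _ (H _) (H _)) !(Qf_ext _ (H _) (fun=> erefl)).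
Qed.

Lemma norm2_Pact (R : numFieldType) d L (ps : forall l, 'S_(d l))
  (dg : forall l, 'rV[R]_(d l)) t : in_Gscaled L dg ->
  params_norm2 L (Pact L ps dg t) = EQ L (dd L dg) t.
Proof.
move=> hP; rewrite /params_norm2 /EQ /= !frob_Pact // !frob_Pbias.
congr (_ + _); apply eq_bigr => l _; by rewrite !frob_Pact // !frob_Pbias.
Qed.

Lemma norm2_id (R : numFieldType) d L (t : rnn_params R d) :
  params_norm2 L t = EQ L (fun l (_ : 'I_(d l)) => 1) t.
Proof.
rewrite /params_norm2 /EQ !frob_id.
congr (_ + _); apply eq_bigr => l _; by rewrite !frob_id.
Qed.

Lemma EQ_gap (R : numFieldType) d L (f : forall l, 'I_(d l) -> R) t :
  EQ L (fun l i => f l i ^+ 2) t + EQ L (fun l (_ : 'I_(d l)) => 1) t - 2 * EQ L f t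
  = EG L f t.
Proof.
rewrite /EG -!Q_gap.
have -> : \sum_(1 <= l < L) (Gq (f l.-1.+1) (f l.-1.+1) (Wrec t l.-1)
       + Gq (f l.-1.+1) (f l.-1) (Wff t l.-1) + Gq (f l.-1.+1) (fun _ => 1) (bias t l.-1))
  = \sum_(1 <= l < L) (Qf (fun i => f l.-1.+1 i ^+ 2) (fun i => f l.-1.+1 i ^+ 2) (Wrec t l.-1)
       + Qf (fun i => f l.-1.+1 i ^+ 2) (fun i => f l.-1 i ^+ 2) (Wff t l.-1)
       + Qf (fun i => f l.-1.+1 i ^+ 2) (fun _ => 1) (bias t l.-1))
    + \sum_(1 <= l < L) (Qf (fun _ => 1) (fun _ => 1) (Wrec t l.-1)
       + Qf (fun _ => 1) (fun _ => 1) (Wff t l.-1) + Qf (fun _ => 1) (fun _ => 1) (bias t l.-1))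
    - 2 * \sum_(1 <= l < L) (Qf (f l.-1.+1) (f l.-1.+1) (Wrec t l.-1)
       + Qf (f l.-1.+1) (f l.-1) (Wff t l.-1) + Qf (f l.-1.+1) (fun _ => 1) (bias t l.-1)).
  symmetry; apply: sum3 => l; rewrite -!Q_gap.
  have -> : (fun _ : 'I_1 => (1 : R) ^+ 2) = (fun _ => 1) by rewrite expr1n.
  ring.
rewrite /EQ.
have -> : (fun _ : 'I_1 => (1 : R) ^+ 2) = (fun _ => 1) by rewrite expr1n.
ring.
Qed.

Theorem mainTheorem5 (R : rcfType) (d : nat -> nat) (L : nat)
    (theta : rnn_params R d)
    (hb : forall l, (l < L)%N -> forall i, bias theta l i 0 != 0)
    (ps : forall l, 'S_(d l)) (dg : forall l, 'rV[R]_(d l))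
    (hP : in_Gscaled L dg)
    (hX : in_X L theta theta)
    (hX' : in_X L theta (Pact L ps dg theta)) :
  forall l, (0 < l < L)%N -> diag_mx (dg l) = 1%:M.
Proof.
move=> [|k] hl; first by [].
pose sdg := fun l => map_mx (@Num.sqrt R) (dg l).
have hPs : in_Gscaled L sdg.
  by move=> l hl' i; rewrite mxE sqrtr_gt0; apply: hP.
pose f := dd L sdg.
have hf2 : forall l i, f l i ^+ 2 = dd L dg l i.
  move=> l i; rewrite /f /dd; case: ifP => H; last by rewrite expr1n.
  by rewrite mxE sqr_sqrtr // ltW // hP.
have e1 : params_norm2 L (Pact L ps dg theta) = EQ L (fun l i => f l i ^+ 2) theta.
  by rewrite norm2_Pact // (@EQ_ext _ _ _ _ _ theta (fun l i => esym (hf2 l i))).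
have e2 : params_norm2 L (Pact L ps sdg theta) = EQ L f theta by rewrite norm2_Pact.
have h1 : params_norm2 L (Pact L ps dg theta) <= params_norm2 L (Pact L ps sdg theta).
  by have := hX'.2 ps sdg hPs; rewrite /params_norm ler_sqrt // norm2_ge0.
have h2 : params_norm2 L theta <= params_norm2 L (Pact L ps sdg theta).
  by have := hX.2 ps sdg hPs; rewrite /params_norm ler_sqrt // norm2_ge0.
have hG : EG L f theta <= 0.
  rewrite -EQ_gap -norm2_id -e1 -e2; lra.
have hk : Gq (f k.+1) (fun _ => 1) (bias theta k) <= EG L f theta.
  rewrite /EG (bigD1_seq k.+1) /=; last by apply: iota_uniq.
    2: by rewrite mem_index_iota.
  set S := \sum_(_ <- _ | _) _.
  have S0 : 0 <= S by apply: sumr_ge0 => i _; rewrite !addr_ge0 // Gq_ge0.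
  have := Gq_ge0 (f L.-1.+1) (f L.-1) (Wff theta L.-1).
  have := Gq_ge0 (f L.-1.+1) (fun _ => 1) (bias theta L.-1).
  have := Gq_ge0 (f k.+1) (f k.+1) (Wrec theta k).
  have := Gq_ge0 (f k.+1) (f k) (Wff theta k).
  lra.
have h0 : Gq (f k.+1) (fun _ => 1) (bias theta k) = 0.
  by apply/le_anti; rewrite Gq_ge0 (le_trans hk hG).
have hkL : (k < L)%N by case/andP: hl => _ /ltnW.
have hi : forall i, dg k.+1 0 i = 1.
  move=> i.
  have H1 : \sum_j ((f k.+1 i / 1) ^+ 2 - 1) ^+ 2 * bias theta k i j ^+ 2 = 0.
    apply: (psumr_eq0P _ h0) => // i' _; apply: sumr_ge0 => j _.
    by apply: mulr_ge0; apply: sqr_ge0.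
  have H2 : ((f k.+1 i / 1) ^+ 2 - 1) ^+ 2 * bias theta k i 0 ^+ 2 = 0.
    apply: (psumr_eq0P _ H1) => // j _.
    by apply: mulr_ge0; apply: sqr_ge0.
  move/eqP: H2; rewrite mulf_eq0 !expf_eq0 /= (negbTE (hb _ hkL i)) orbF.
  by rewrite divr1 hf2 subr_eq0 /dd hl => /eqP.
rewrite -diag_const_mx; congr diag_mx; apply/rowP => j; by rewrite !mxE hi.
Qed.
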